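(* Let $\mathcal{I}$ be an interval hypergraph on $[n]$, $A$ an acyclic orientation of $\mathcal{I}$, and $i\in[n]$ such that there is $I\in\mathcal{I}$ with $i=A(I)<\max(I)$. Then there exists $j>i$ such that the orientation $B$ obtained from $A$ by flipping $i$ to $j$ (i.e. $B(H)=j$ if $A(H)=i$ and $j\in H$, and $B(H)=A(H)$ otherwise) is acyclic. Symmetrically, if there is $I\in\mathcal{I}$ with $i=A(I)>\min(I)$, there exists $j<i$ such that the orientation obtained from $A$ by flipping $i$ to $j$ (defined by the same formula) is acyclic.
   Context: An interval hypergraph $\mathcal{I}$ on $[n]$ is a collection of intervals of $[n]$ containing all singletons. An orientation is a map $O:\mathcal{I}\to[n]$ with $O(I)\in I$; it is acyclic if there are no $H_1,\dots,H_k$, $k\ge2$, with $O(H_{i+1})\in H_i\setminus\{O(H_i)\}$ for $i\in[k-1]$ and $O(H_1)\in H_k\setminus\{O(H_k)\}$. *)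

(* Defs.v *)
From mathcomp Require Import all_boot all_order.
Set Implicit Arguments. Unset Strict Implicit. Unset Printing Implicit Defensive.

(* Ground set [n] is represented by 'I_n = {0,..,n-1} (a shift of {1..n}).
   An interval is a pair (a,b) with a <= b, denoting {a,...,b}. *)
Definition interval (n : nat) := ('I_n * 'I_n)%type.

Definition in_ival n (x : 'I_n) (I : interval n) : bool := (I.1 <= x <= I.2)%N.

Definition interval_hypergraph n (H : {set interval n}) : Prop :=
  (forall I, I \in H -> (I.1 <= I.2)%N) /\ (forall x : 'I_n, (x, x) \in H).

Definition orientation n (H : {set interval n}) (O : interval n -> 'I_n) : Prop :=
  forall I, I \in H -> in_ival (O I) I.

Definition in_minus n (O : interval n -> 'I_n) (x : 'I_n) (I : interval n) :=
  in_ival x I && (x != O I).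

Definition acyclic n (H : {set interval n}) (O : interval n -> 'I_n) : Prop :=
  ~ exists (k : nat) (h : nat -> interval n),
      [/\ (2 <= k)%N,
          (forall i, (i < k)%N -> h i \in H),
          (forall i, (i.+1 < k)%N -> in_minus O (O (h i.+1)) (h i))
        & in_minus O (O (h 0)) (h k.-1)].

Definition flip n (A : interval n -> 'I_n) (i j : 'I_n) : interval n -> 'I_n :=
  fun I => if (A I == i) && in_ival j I then j else A I.

(* Main.v *)
Require Import Defs.
From mathcomp Require Import all_boot all_order.
From mathcomp Require Import zify.
Set Implicit Arguments. Unset Strict Implicit.

Definition eO n (H : {set interval n}) (O : interval n -> 'I_n) : rel 'I_n :=
  fun u v => [exists J, (J \in H) && ((O J == u) && in_minus O v J)].

Lemma eOP n (H : {set interval n}) O u v :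
  reflect (exists2 J : interval n, (J \in H) & ((O J = u) /\ in_minus O v J)) (eO H O u v).
Proof.
apply: (iffP existsP) => [[J /andP[JH /andP[/eqP E M]]]|[J JH [E M]]].
  by exists J.
by exists J; rewrite JH E eqxx M.
Qed.

Lemma acyc_nc n (H : {set interval n}) O : acyclic H O ->
  forall u v, eO H O u v -> connect (eO H O) v u -> False.
Proof.
move=> Ac u v e0 /connectP[p pth lst].
have /eOP[J0 I0H [E0 M0]] := e0.
have uv : u != v.
  by move: M0; rewrite /in_minus E0 => /andP[_]; rewrite eq_sym.
have ep : path (eO H O) u (v :: p) by rewrite /= pth andbT.
have k2 : (2 <= (size p).+1)%N.
  by case: p {pth ep} lst => [|z p] //= vu; rewrite vu eqxx in uv.
set s := u :: v :: p.
set k := (size p).+1.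
have step : forall m, (m < k)%N -> eO H O (nth u s m) (nth u s m.+1).
  by move=> m mk; move/(pathP u): ep => /(_ m mk).
pose h m := if [pick J in H | (O J == nth u s m) && in_minus O (nth u s m.+1) J]
  is Some J then J else J0.
have hP : forall m, (m < k)%N ->
  [/\ h m \in H, O (h m) = nth u s m & in_minus O (nth u s m.+1) (h m)].
  move=> m mk; rewrite /h; case: pickP => [J /andP[JH /andP[/eqP-> M]] | none] //.
  move/eOP: (step m mk) => [J JH [E M]]; move: (none J); by rewrite JH E eqxx M.
have lastk : nth u s k = u.
  by rewrite /s /k /= -[size p]/((size (v::p)).-1) nth_last /= lst.
apply: Ac; exists k, h; split => //.
- by move=> m mk; case: (hP m mk).
- move=> m mk; have [_ _ M] := hP m (ltnW mk); have [_ E _] := hP m.+1 mk.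
  by rewrite E.
- have [_ E _] := hP 0 (ltnW k2).
  have [_ _ M] := hP k.-1 (leqnn k).
  rewrite E; move: M; rewrite prednK ?lastk //; lia.
Qed.

Lemma conv n (H : {set interval n}) O :
  (forall u v, eO H O u v -> connect (eO H O) v u -> False) -> acyclic H O.
Proof.
move=> N [k [h [k2 hH hs hl]]].
have E : forall m, (m.+1 < k)%N -> eO H O (O (h m)) (O (h m.+1)).
  move=> m mk; apply/eOP; exists (h m); [apply: hH; exact: ltnW | split=> //; exact: hs].
have El : eO H O (O (h k.-1)) (O (h 0)).
  apply/eOP; exists (h k.-1); [apply: hH; lia | by split].
have C : forall t m, m + t = k.-1 -> connect (eO H O) (O (h m)) (O (h 0)).
  elim=> [|t JH] m Hm.
    rewrite addn0 in Hm; rewrite Hm; exact: connect1.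
  apply: connect_trans (JH m.+1 _); [apply: connect1; apply: E; lia | lia].
apply: (N _ _ (E 0 _) (C (k.-2) 1 _)); lia.
Qed.

Lemma cross n (H : {set interval n}) A (i : 'I_n) : orientation H A ->
  forall x y, connect (eO H A) x y -> ((x < i < y) || (y < i < x))%N ->
  connect (eO H A) x i.
Proof.
move=> OA x y /connectP[p]; elim: p x => [|z p IHp] x /=.
  move=> _ ->; case/orP => /andP[a b]; have := ltn_trans a b; by rewrite ltnn.
move=> /andP[exz pz] lz btw.
case: (eqVneq z i) => [zi|zni]; first by rewrite -zi; exact: connect1.
have [bzy|nb] := boolP ((z < i < y) || (y < i < z))%N.
  exact: connect_trans (connect1 exz) (IHp z pz lz bzy).
apply: connect1; move/eOP: exz => [J JH [Ax M]]; apply/eOP; exists J => //; split => //.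
have := OA J JH; rewrite Ax; move: M zni nb btw.
rewrite /in_minus /in_ival Ax -!val_eqE /= => /andP[/andP[a b] _].
move=> zni nb btw /andP[c d].
have xi : (val i != val x). apply/negP => /eqP xi0. move: btw; rewrite xi0 ltnn /=. by rewrite andbF.
rewrite xi andbT. apply/andP; split; lia.
Qed.

Lemma minel n (H : {set interval n}) A (V : pred 'I_n) v0 : acyclic H A -> V v0 ->
  exists2 j, V j & forall v, V v -> v != j -> ~ connect (eO H A) v j.
Proof.
move=> Ac Vv0; have NA := acyc_nc Ac.
pose anc x := [set y | connect (eO H A) y x].
case: (arg_minnP (fun x => #|anc x|) Vv0) => j Vj minj.
exists j => // v Vv vj cvj.
have : anc v \proper anc j.
  apply/properP; split.
    by apply/subsetP => y; rewrite !inE => cyv; exact: connect_trans cyv cvj.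
  exists j; rewrite !inE ?connect0 //; apply/negP => cjv.
  move/connectP: cvj => [[|z p] /=]; first by move=> _ vj'; rewrite vj' eqxx in vj.
  move=> /andP[evz pz] lz.
  apply: (NA _ _ evz); apply: connect_trans cjv.
  apply/connectP; exists p => //.
by move/proper_card; rewrite ltnNge minj.
Qed.

Lemma core n (H : {set interval n}) A (i j : 'I_n) :
  orientation H A -> acyclic H A -> i != j ->
  (forall w, (exists2 J, J \in H & A J = i /\ in_ival w J) -> w != i -> w != j ->
     ~ connect (eO H A) w j) ->
  acyclic H (flip A i j).
Proof.
move=> OA AcA ij K; have NA := acyc_nc AcA.
set eA := eO H A; set eB := eO H (flip A i j).
pose P w := exists2 J, J \in H & A J = i /\ in_ival w J.
pose nw w := exists2 J, J \in H & [/\ A J = i, in_ival j J, in_ival w J & w != j].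
have cls : forall x z, eB x z ->
    (x = j /\ nw z) \/ (eA x z /\ (x = i -> [/\ z != j, P z & z != i])).
  move=> x z /eOP[J JH []]; rewrite /flip /in_minus.
  case: ifP => [/andP[/eqP Ai jJ] <- /andP[zJ zj] | nj Ax /andP[zJ zx]].
    by left; split => //; exists J.
  right; split.
    by apply/eOP; exists J => //; split => //; rewrite /in_minus zJ.
  move=> xi; rewrite xi in Ax; split.
  - apply/negP => /eqP zj; subst z; by rewrite Ax eqxx zJ in nj.
  - by exists J.
  - by rewrite -Ax.
have Lfirst : forall x, connect eB x j -> connect eA x j.
  move=> x /connectP[p]; elim: p x => [|z p IHp] x /=.
    by move=> _ ->; exact: connect0.
  move=> /andP[exz pz] lz.
  case: (cls _ _ exz) => [[-> _] | [ea _]]; first exact: connect0.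
  exact: connect_trans (connect1 ea) (IHp z pz lz).
have Knew : forall w, nw w -> ~ connect eB w j.
  move=> w [J JH [Ai jJ wJ wj]] /connectP[p]; case: p => [|z p] /=.
    by move=> _ wj'; rewrite wj' eqxx in wj.
  move=> /andP[ewz pz] lz.
  have czj : connect eA z j by apply: Lfirst; apply/connectP; exists p.
  case: (cls _ _ ewz) => [[wj' _] | [ewzA wi]]; first by rewrite wj' eqxx in wj.
  case: (eqVneq w i) => [wi' | wni].
    by have [zj Pz zi] := wi wi'; exact: K z Pz zi zj czj.
  apply: (K w _ wni wj (connect_trans (connect1 ewzA) czj)); by exists J.
have N : forall a b, connect eB a b ->
    connect eA a b \/ (connect eB a j /\ exists2 w, nw w & connect eB w b).
  move=> a b /connectP[p]; elim: p a => [|z p IHp] a /=.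
    by move=> _ ->; left.
  move=> /andP[eaz pz] lz; have := IHp z pz lz.
  case: (cls _ _ eaz) => [[-> nz] _ | [eA' _]].
    right; split; first exact: connect0.
    by exists z => //; apply/connectP; exists p.
  case=> [c|[c ex]]; first by left; exact: connect_trans (connect1 eA') c.
  by right; split => //; exact: connect_trans (connect1 eaz) c.
apply: conv => x y exy cyx.
case: (cls _ _ exy) => [[xj ny] | [exyA _]].
  by rewrite xj in cyx; exact: Knew y ny cyx.
case: (N _ _ cyx) => [c | [cyj [w nw' cwx]]].
  exact: NA exyA c.
apply: (Knew w nw'); exact: connect_trans cwx (connect_trans (connect1 exy) cyj).
Qed.

Theorem proposition3p16 (n : nat) (H : {set interval n}) (A : interval n -> 'I_n)
  (i : 'I_n) :
  interval_hypergraph H -> orientation H A -> acyclic H A ->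
  ((exists2 I, I \in H & (A I = i) /\ (i < I.2)%N) ->
     exists2 j : 'I_n, (i < j)%N & acyclic H (flip A i j)) /\
  ((exists2 I, I \in H & (A I = i) /\ (I.1 < i)%N) ->
     exists2 j : 'I_n, (j < i)%N & acyclic H (flip A i j)).
Proof.
move=> [Hle Hsing] OA Ac; have NA := acyc_nc Ac.
have eiw : forall w J, J \in H -> A J = i -> in_ival w J -> w != i -> eO H A i w.
  move=> w J JH AJ wJ wi; apply/eOP; exists J => //; split => //.
  by rewrite /in_minus wJ AJ.
split.
- move=> [J JH [Ai iJ2]].
  pose V : pred 'I_n := fun x => (i < x)%N &&
     [exists J, (J \in H) && (A J == i) && in_ival x J].
  have VJ2 : V J.2.
    rewrite /V iJ2 /=; apply/existsP; exists J; rewrite JH Ai eqxx /in_ival /=.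
    by rewrite Hle // leqnn.
  have [j Vj minj] := minel Ac VJ2.
  have ij : (i < j)%N by case/andP: Vj.
  exists j => //; apply: core => //.
    by rewrite -val_eqE /= neq_ltn ij.
  move=> w [J' J'H [Ai' wJ']] wi wj cwj.
  case: (ltngtP i w) => [iw | wi' | e].
  + apply: (minj w _ wj cwj); rewrite /V iw /=; apply/existsP; exists J'.
    by rewrite J'H Ai' eqxx wJ'.
  + have := cross (i:=i) OA cwj; rewrite wi' ij /= => /(_ isT) cwi.
    exact: NA (eiw w J' J'H Ai' wJ' wi) cwi.
  + by move: wi; rewrite -val_eqE /= e eqxx.
- move=> [J JH [Ai iJ1]].
  pose V : pred 'I_n := fun x => (x < i)%N &&
     [exists J, (J \in H) && (A J == i) && in_ival x J].
  have VJ1 : V J.1.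
    rewrite /V iJ1 /=; apply/existsP; exists J; rewrite JH Ai eqxx /in_ival /=.
    by rewrite Hle // leqnn.
  have [j Vj minj] := minel Ac VJ1.
  have ij : (j < i)%N by case/andP: Vj.
  exists j => //; apply: core => //.
    by rewrite -val_eqE /= neq_ltn ij orbT.
  move=> w [J' J'H [Ai' wJ']] wi wj cwj.
  case: (ltngtP i w) => [iw | wi' | e].
  + have := cross (i:=i) OA cwj; rewrite iw ij /= orbT => /(_ isT) cwi.
    exact: NA (eiw w J' J'H Ai' wJ' wi) cwi.
  + apply: (minj w _ wj cwj); rewrite /V wi' /=; apply/existsP; exists J'.
    by rewrite J'H Ai' eqxx wJ'.
  + by move: wi; rewrite -val_eqE /= e eqxx.
Qed.
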